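(* For every integer $n\ge8$, $\mathfrak{S}(G_n)<2^n$, where $G_n$ is the bipartite graph with parts $V_1=[n]$ and $V_2=[n]$ (two disjoint copies of $\{1,\dots,n\}$) and edge set $\{(a,b)\in V_1\times V_2:|a-b|=1\}$.
   Context: For a bipartite graph $G$ with parts $V_1,V_2$ whose vertices are labelled by integers (labels may be shared between the parts), $\mathfrak{S}(G)=\sum 2^{-|S_1\cup S_2|}$, the sum over all pairs $S_1\subseteq V_1$, $S_2\subseteq V_2$ with no edge of $G$ between $S_1$ and $S_2$; here $S_1\cup S_2$ is the union of the sets of labels (so a label appearing in both $S_1$ and $S_2$ is counted once). *)

(* Defs.v *)
From mathcomp Require Import all_boot all_order all_algebra.
Set Implicit Arguments. Unset Strict Implicit. Unset Printing Implicit Defensive.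
Import Order.TTheory GRing.Theory Num.Theory.
Local Open Scope ring_scope.

(* A vertex-labelled bipartite graph: parts V1, V2 (finite types), labels
   lab1 : V1 -> int, lab2 : V2 -> int (possibly shared between parts), and
   edge relation adj : V1 -> V2 -> bool. *)

Definition label_count (V1 V2 : finType) (lab1 : V1 -> int) (lab2 : V2 -> int)
  (S1 : {set V1}) (S2 : {set V2}) : nat :=
  size (undup ([seq lab1 x | x in S1] ++ [seq lab2 y | y in S2])).

Definition no_edge (V1 V2 : finType) (adj : V1 -> V2 -> bool)
  (S1 : {set V1}) (S2 : {set V2}) : bool :=
  [forall x in S1, forall y in S2, ~~ adj x y].

Definition frakS (V1 V2 : finType) (lab1 : V1 -> int) (lab2 : V2 -> int)
  (adj : V1 -> V2 -> bool) : rat :=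
  \sum_(S1 : {set V1}) \sum_(S2 : {set V2} | no_edge adj S1 S2)
     ((2%:R : rat) ^- (label_count lab1 lab2 S1 S2)).

(* G_n: parts two copies of [n] = {1..n}; vertex i : 'I_n has label i+1;
   edge (a,b) iff |a - b| = 1. *)
Definition Gn_lab (n : nat) (i : 'I_n) : int := (i.+1)%:Z.
Definition Gn_adj (n : nat) (a b : 'I_n) : bool := (`|(a%:Z - b%:Z)%R|%N == 1)%N.

(* Main.v *)
Require Import Defs.
From mathcomp Require Import all_boot all_order all_algebra.
From mathcomp Require Import zify ring lra.
Import Order.TTheory GRing.Theory Num.Theory.
Local Open Scope ring_scope.

Definition X := (bool * bool)%type.
Definition allowed (x y : X) : bool := ~~ (x.1 && y.2) && ~~ (x.2 && y.1).
Fixpoint okp (x : X) (s : seq X) : bool :=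
  if s is y :: s' then allowed x y && okp y s' else true.
Definition w1 (x : X) : rat := if x.1 || x.2 then (2%:R)^-1 else 1.
Definition G n (s0 : X) : rat :=
  \sum_(t : n.-tuple X | okp s0 t) \prod_(x <- t) w1 x.

Lemma G0 s0 : G 0 s0 = 1.
Proof.
rewrite /G (eq_bigl (pred1 [tuple])); last by move=> t; rewrite tuple0 /= eqxx.
by rewrite big_pred1_eq big_nil.
Qed.

Lemma GS n s0 : G n.+1 s0 = \sum_(x : X | allowed s0 x) w1 x * G n x.
Proof.
rewrite /G (reindex (fun p : X * n.-tuple X => [tuple of p.1 :: p.2])) /=; last first.
  exists (fun t => (thead t, [tuple of behead t])).
    by case=> x t _ /=; f_equal; apply: val_inj.
  by move=> t _; rewrite [in RHS](tuple_eta t).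
under eq_bigr do rewrite big_cons.
rewrite -(pair_big_dep (allowed s0) (fun x (t : n.-tuple X) => okp x (tval t)) (fun x (t : n.-tuple X) => w1 x * \prod_(y <- t) w1 y)).
by apply: eq_bigr => x _; rewrite big_distrr.
Qed.

Lemma sumX (F : X -> rat) :
  \sum_(x : X) F x = F (true,true) + F (true,false) + (F (false,true) + F (false,false)).
Proof.
rewrite (eq_bigr (fun p : X => F (p.1, p.2))); last by case.
by rewrite -(pair_big xpredT xpredT (fun a b => F (a, b))) /= !big_bool.
Qed.

Fixpoint H (n : nat) : rat * rat * rat :=
  if n is m.+1 then let: (p, q, r) := H m in (p + q + r / 2%:R, p + q / 2%:R, p)
  else (1, 1, 1).

Lemma GH n : [/\ G n (false,false) = (H n).1.1, G n (true,false) = (H n).1.2,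
  G n (false,true) = (H n).1.2 & G n (true,true) = (H n).2].
Proof.
elim: n => [|n [e1 e2 e3 e4]]; first by rewrite !G0.
rewrite /= !GS; case: (H n) e1 e2 e3 e4 => [[p q] r] /= e1 e2 e3 e4.
rewrite !(big_mkcond (allowed _)) !sumX /allowed /w1 /= e1 e2 e3 e4.
by split; rewrite /= ?mulr1 ?mul1r ?add0r ?addr0; field; rewrite ?pnatr_eq0.
Qed.

Lemma H9 : let: (p, q, r) := H 9 in
  [&& p <= (99%:R/100%:R) * 2%:R ^+ 9, q <= (66%:R/100%:R) * 2%:R ^+ 9
    & r <= (99%:R/200%:R) * 2%:R ^+ 9].
Proof. vm_compute. reflexivity. Qed.

Lemma H8 : (H 8).1.1 < 2%:R ^+ 8.
Proof. vm_compute. reflexivity. Qed.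

Lemma HS m : H m.+1 = let: (p, q, r) := H m in (p + q + r / 2%:R, p + q / 2%:R, p).
Proof. by []. Qed.

Lemma Hinv k : let: (p, q, r) := H (9 + k) in
  [&& p <= (99%:R/100%:R) * 2%:R ^+ (9 + k), q <= (66%:R/100%:R) * 2%:R ^+ (9 + k)
    & r <= (99%:R/200%:R) * 2%:R ^+ (9 + k)].
Proof.
elim: k => [|k]; first by rewrite addn0; exact: H9.
rewrite addnS HS; case: (H (9 + k)) => [[p q] r] /and3P [hp hq hr].
set m := 2%:R ^+ (9 + k) in hp hq hr *.
have m0 : 0 < m by rewrite exprn_gt0.
rewrite exprS -/m; apply/and3P; split; lra.
Qed.

Lemma Hfinal n : (8 <= n)%N -> (H n).1.1 < 2%:R ^+ n.
Proof.
rewrite leq_eqVlt => /orP [/eqP <-|]; first exact: H8.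
move=> /subnKC <-; have := Hinv (n - 9).
case: (H (9 + (n - 9))) => [[p q] r] /= /and3P [hp _ _] /=.
set m := 2%:R ^+ (9 + (n - 9)) in hp *.
have : 0 < m by rewrite exprn_gt0.
lra.
Qed.

Lemma okp_nth (d x : X) (s : seq X) :
  okp x s = all (fun i => allowed (nth d (x :: s) i) (nth d (x :: s) i.+1)) (iota 0 (size s)).
Proof.
elim: s x => [|y s IH] x //=.
by rewrite IH (iotaDl 1 0) all_map.
Qed.

Lemma adjE n (a b : 'I_n) : Gn_adj a b = (a.+1 == b) || (b.+1 == a).
Proof.
rewrite /Gn_adj; case: a b => [a ha] [b hb] /=.
apply/idP/idP; first by move/eqP; lia.
by case/orP => /eqP; lia.
Qed.

Lemma lc_card n (S1 S2 : {set 'I_n}) :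
  label_count (@Gn_lab n) (@Gn_lab n) S1 S2 = #|S1 :|: S2|.
Proof.
have inj : injective (@Gn_lab n).
  by move=> a b [] e; apply: val_inj.
rewrite /label_count -map_cat undup_map_inj // size_map cardE.
apply: perm_size; apply: uniq_perm; rewrite ?undup_uniq ?enum_uniq //.
by move=> i; rewrite mem_undup mem_cat !mem_enum in_setU.
Qed.

Section T.
Variable n : nat.
Definition hS (t : n.-tuple X) : {set 'I_n} * {set 'I_n} :=
  ([set i | (tnth t i).1], [set i | (tnth t i).2]).

Lemma hS_bij : bijective hS.
Proof.
exists (fun p : {set 'I_n} * {set 'I_n} => [tuple ((i \in p.1), (i \in p.2)) | i < n]).
  move=> t; apply: eq_from_tnth => i; rewrite tnth_mktuple !inE.
  by case: (tnth t i).
by case=> A B; rewrite /hS; congr (_, _); apply/setP => i; rewrite inE tnth_mktuple.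
Qed.

Lemma weightE (t : n.-tuple X) :
  (2%:R : rat) ^- (label_count (@Gn_lab n) (@Gn_lab n) (hS t).1 (hS t).2)
  = \prod_(x <- t) w1 x.
Proof.
rewrite lc_card big_tuple -exprVn -prodr_const big_mkcond /=.
apply: eq_bigr => i _; rewrite /w1 !inE.
by case: (tnth t i) => [[] []].
Qed.

Lemma no_edgeE (t : n.-tuple X) :
  no_edge (@Gn_adj n) (hS t).1 (hS t).2 = okp (false, false) t.
Proof.
set d := (false, false).
rewrite (okp_nth d) size_tuple; apply/idP/idP.
- move=> /forallP H; apply/allP => i; rewrite mem_iota add0n => /andP [_ hi].
  case: i hi => [|j] hi /=; first by case: (nth _ _ _) => [[] []].
  have hj : (j < n)%N by lia.
  have hj1 : (j.+1 < n)%N by [].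
  have e1 := tnth_nth d t (Ordinal hj); have e2 := tnth_nth d t (Ordinal hj1).
  rewrite /= in e1 e2; rewrite /allowed -e1 -e2.
  apply/andP; split; apply/negP => /andP [a b].
  + have := H (Ordinal hj); rewrite /= inE a /= => /forallP /(_ (Ordinal hj1)).
    by rewrite inE b adjE /= eqxx.
  + have := H (Ordinal hj1); rewrite /= inE b /= => /forallP /(_ (Ordinal hj)).
    by rewrite inE a adjE /= eqxx orbT.
- move=> /allP H; apply/forallP => x; apply/implyP; rewrite inE => hx.
  apply/forallP => y; apply/implyP; rewrite inE => hy.
  rewrite adjE; apply/negP => /orP [] /eqP e.
  + have : x.+1 \in iota 0 n by rewrite mem_iota add0n e ltn_ord.
    move/H; rewrite /allowed -[nth d (d :: t) x.+1]/(nth d t x) -(tnth_nth d t x) hx /=.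
    have -> : nth d t x.+1 = tnth t y by rewrite (tnth_nth d) -e.
    by rewrite hy.
  + have : y.+1 \in iota 0 n by rewrite mem_iota add0n e ltn_ord.
    move/H; rewrite /allowed -[nth d (d :: t) y.+1]/(nth d t y) -(tnth_nth d t y) hy /=.
    have -> : nth d t y.+1 = tnth t x by rewrite (tnth_nth d) -e.
    by rewrite hx andbF.
Qed.
End T.

Lemma frakS_G n : frakS (@Gn_lab n) (@Gn_lab n) (@Gn_adj n) = G n (false, false).
Proof.
rewrite /frakS pair_big_dep (reindex (@hS n)) /=; last exact: onW_bij (hS_bij n).
apply: eq_big => t; first by rewrite no_edgeE.
by move=> _; rewrite weightE.
Qed.

Theorem mainTheorem14 (n : nat) (hn : (8 <= n)%N) :
  frakS (@Gn_lab n) (@Gn_lab n) (@Gn_adj n) < (2%:R : rat) ^+ n.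
Proof.
rewrite frakS_G; have [-> _ _ _] := GH n; exact: Hfinal.
Qed.
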